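(* Let $S=\{p_1,\dots,p_n\}$ be a set of $n$ distinct primes. The spectrum of $\mathbf{U}_S$ on $\mathcal{H}^n$ is the set \[\{p_1^{k_1}\cdots p_n^{k_n}\,:\,k_j\in\mathbb{N}=\{0,1,2,\dots\}\text{ for every }j\},\] and each eigenvalue has multiplicity $1$.
   Context: For a power series $f(x)=\sum_{n\ge0}a_nx^n$ and a positive integer $q$, $U_qf(x)=\sum_{n\ge0}a_{qn}x^n$. For $k\in\mathbb{N}$ let $\phi_k(x)=(x\frac{d}{dx})^k\big(\frac{1}{1-x}\big)$, and let $\mathcal{V}$ be the complex span of $\phi_0,\phi_1,\dots$. Let $\mathcal{H}^n=\mathcal{V}\otimes\cdots\otimes\mathcal{V}$ ($n$ factors), where $f_1\otimes\cdots\otimes f_n$ is identified with the function $f_1(x_1)\cdots f_n(x_n)$. The operator $\mathbf{U}_S=U_{p_1}\otimes\cdots\otimes U_{p_n}$ is defined by $\mathbf{U}_S(f_1\otimes\cdots\otimes f_n)(x_1,\dots,x_n)=(U_{p_1}f_1)(x_1)\cdots(U_{p_n}f_n)(x_n)$, extended linearly. The spectrum is the set of $\lambda$ with $\mathbf{U}_SF=\lambda F$ for some nonzero $F\in\mathcal{H}^n$; the multiplicity of $\lambda$ is the dimension of its eigenspace. *)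

(* Defs.v *)
From Stdlib Require Import Reals.
From mathcomp Require Import all_boot all_algebra complex.
From mathcomp Require Import Rstruct.

Set Implicit Arguments.
Unset Strict Implicit.
Unset Printing Implicit Defensive.
Import GRing.Theory Num.Theory.
Local Open Scope ring_scope.

Definition C : numClosedFieldType := (Rdefinitions.R)[i].

(* A (formal) power series in one variable, f(x) = sum_m a_m x^m, is
   identified with its coefficient sequence m |-> a_m. *)
Definition series1 := nat -> C.

(* A power series in n variables x_0,...,x_{n-1} is identified with its
   coefficient family indexed by multi-indices m : 'I_n -> nat. *)
Definition seriesn (n : nat) := ('I_n -> nat) -> C.

Definition Uq (q : nat) (f : series1) : series1 := fun m => f (q * m)%N.

Definition xDx (f : series1) : series1 := fun m => m%:R * f m.

Definition geom : series1 := fun _ => 1.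

Definition phi (k : nat) : series1 := iter k xDx geom.

Definition inV (f : series1) : Prop :=
  exists (N : nat) (c : 'I_N -> C) (k : 'I_N -> nat),
    f = fun m => \sum_(j < N) c j * phi (k j) m.

Definition tensor (n : nat) (f : 'I_n -> series1) : seriesn n :=
  fun m => \prod_(i < n) f i (m i).

Definition inH (n : nat) (F : seriesn n) : Prop :=
  exists (N : nat) (c : 'I_N -> C) (f : 'I_N -> 'I_n -> series1),
    (forall j i, inV (f j i)) /\
    F = fun m => \sum_(j < N) c j * tensor (f j) m.

(* U_S = U_{p_1} (x) ... (x) U_{p_n}: on coefficient families it acts by
   F |-> (m |-> F (p_1 m_1, ..., p_n m_n)); on pure tensors this is
   exactly (U_{p_1} f_1)(x_1) ... (U_{p_n} f_n)(x_n), and it is linear. *)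
Definition US (n : nat) (p : 'I_n -> nat) (F : seriesn n) : seriesn n :=
  fun m => F (fun i => (p i * m i)%N).

Lemma US_tensor (n : nat) (p : 'I_n -> nat) (f : 'I_n -> series1) :
  US p (tensor f) = tensor (fun i => Uq (p i) (f i)).
Proof. by []. Qed.

Definition eigvec (n : nat) (p : 'I_n -> nat) (lam : C) (F : seriesn n) : Prop :=
  inH F /\ US p F = (fun m => lam * F m).

Definition in_spectrum (n : nat) (p : 'I_n -> nat) (lam : C) : Prop :=
  exists F : seriesn n, eigvec p lam F /\ F <> (fun _ => 0).

Definition multiplicity_one (n : nat) (p : 'I_n -> nat) (lam : C) : Prop :=
  exists F : seriesn n, [/\ eigvec p lam F, F <> (fun _ => 0) &
    forall G, eigvec p lam G -> exists a : C, G = (fun m => a * F m)].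

(* Main.v *)
Require Import Defs.
From mathcomp Require Import all_boot all_algebra complex.
From mathcomp Require Import Rstruct.
From Stdlib Require Import FunctionalExtensionality.
From mathcomp Require Import ring.
Local Open Scope ring_scope.
Import GRing.Theory Num.Theory.

Set Implicit Arguments.
Section S.
Variable n : nat.

Definition mono (k : 'I_n -> nat) (m : 'I_n -> nat) : C :=
  \prod_(i < n) (m i)%:R ^+ k i.

Definition isP (G : seriesn n) : Prop :=
  exists s : seq (C * {ffun 'I_n -> nat}),
    forall m, G m = \sum_(x <- s) x.1 * mono x.2 m.

Lemma isP1 : isP (fun _ => 1).
Proof.
exists [:: (1, [ffun _ => 0%N])] => m.
rewrite big_cons big_nil addr0 mul1r /mono.
by rewrite big1 // => i _; rewrite ffunE expr0.
Qed.

Lemma isPM G1 G2 : isP G1 -> isP G2 -> isP (fun m => G1 m * G2 m).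
Proof.
move=> [s1 H1] [s2 H2].
exists [seq (x.1 * y.1, [ffun i => (x.2 i + y.2 i)%N]) | x : C * {ffun 'I_n -> nat} <- s1, y : C * {ffun 'I_n -> nat} <- s2] => m.
rewrite H1 H2 big_allpairs_dep big_distrl /=; apply: eq_bigr => x _.
rewrite big_distrr /=; apply: eq_bigr => y _ /=.
have -> : mono [ffun i => (x.2 i + y.2 i)%N] m = mono x.2 m * mono y.2 m.
  by rewrite /mono -big_split /=; apply: eq_bigr => i _; rewrite ffunE exprD.
rewrite -!mulrA; congr (_ * _); rewrite mulrCA; congr (_ * _); by rewrite mulrC.
Qed.

Lemma isPD G1 G2 : isP G1 -> isP G2 -> isP (fun m => G1 m + G2 m).
Proof.
move=> [s1 H1] [s2 H2]; exists (s1 ++ s2) => m; by rewrite H1 H2 big_cat.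
Qed.

Lemma isPZ c G : isP G -> isP (fun m => c * G m).
Proof.
move=> [s H]; exists [seq (c * x.1, x.2) | x <- s] => m.
rewrite H big_map big_distrr /=; apply: eq_bigr => x _; by rewrite mulrA.
Qed.

Lemma isP0 : isP (fun _ => 0).
Proof. by exists [::] => m; rewrite big_nil. Qed.

Lemma phiE k m : phi k m = m%:R ^+ k.
Proof.
elim: k m => [|k IH] m; first by rewrite expr0.
by rewrite /phi iterS -/(phi k) /xDx IH exprS.
Qed.

Lemma isP_V (f : series1) i : inV f -> isP (fun m => f (m i)).
Proof.
move=> [N [c [k ->]]].
exists [seq (c j, [ffun l => if l == i then k j else 0%N]) | j <- index_enum 'I_N] => m.
rewrite big_map; apply: eq_bigr => j _ /=; rewrite phiE /mono; congr (_ * _).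
rewrite (bigD1 i) //= ffunE eqxx big1 ?mulr1 // => l /negbTE Hl.
by rewrite ffunE Hl expr0.
Qed.

Lemma isP_H F : inH F -> isP F.
Proof.
move=> [N [c [f [Hf ->]]]].
have: forall r : seq 'I_N, isP (fun m => \sum_(j <- r) c j * tensor (f j) m).
  elim=> [|j r IH].
    by apply: (@eq_ind _ _ isP isP0); apply: functional_extensionality => m; rewrite big_nil.
  have -> : (fun m => \sum_(j0 <- j :: r) c j0 * tensor (f j0) m) =
     (fun m => c j * tensor (f j) m + \sum_(j0 <- r) c j0 * tensor (f j0) m).
    by apply: functional_extensionality => m; rewrite big_cons.
  apply: isPD => //; apply: isPZ.
  rewrite /tensor.
  elim: (index_enum 'I_n) => [|i r' IH'].
    by apply: (@eq_ind _ _ isP isP1); apply: functional_extensionality => m; rewrite big_nil.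
  have -> : (fun m => \prod_(i0 <- i :: r') f j i0 (m i0)) =
     (fun m => f j i (m i) * \prod_(i0 <- r') f j i0 (m i0)).
    by apply: functional_extensionality => m; rewrite big_cons.
  by apply: isPM => //; apply: isP_V.
by apply.
Qed.

Variable p : 'I_n -> nat.
Hypothesis p_prime : forall i, prime (p i).
Hypothesis p_inj : injective p.

Definition mu (k : 'I_n -> nat) : C := (\prod_(i < n) p i ^ k i)%N%:R.

Lemma mono_US k m : mono k (fun i => (p i * m i)%N) = mu k * mono k m.
Proof.
rewrite /mono /mu natr_prod -big_split /=; apply: eq_bigr => i _.
by rewrite natrM exprMn natrX.
Qed.

Lemma logn_mu k j : logn (p j) (\prod_(i < n) p i ^ k i) = k j.
Proof.
have pos : forall i, (0 < p i ^ k i)%N.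
  by move=> i; rewrite expn_gt0 prime_gt0.
have -> : logn (p j) (\prod_(i < n) p i ^ k i) = (\sum_(i < n) logn (p j) (p i ^ k i))%N.
  elim: (index_enum 'I_n) => [|i r IH]; first by rewrite !big_nil logn1.
  rewrite !big_cons lognM ?IH //.
  by elim: r {IH} => [|a r IHr]; rewrite ?big_nil ?big_cons // muln_gt0 pos.
rewrite (bigD1 j) //= lognX logn_prime // eqxx muln1 big1 ?addn0 // => i Hi.
rewrite lognX logn_prime //.
case: eqP => [/p_inj E|]; last by rewrite muln0.
by rewrite E eqxx in Hi.
Qed.

Lemma mu_inj k k' : mu k = mu k' -> k =1 k'.
Proof.
move=> /eqP; rewrite /mu eqr_nat => /eqP E j.
by rewrite -(logn_mu k j) E logn_mu.
Qed.

Lemma key (F : seriesn n) lam (s : seq (C * {ffun 'I_n -> nat})) :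
  (forall m, F m = \sum_(x <- s) x.1 * mono x.2 m) ->
  (forall m, F (fun i => (p i * m i)%N) = lam * F m) ->
  forall (r : seq C) m,
  \sum_(x <- s) x.1 * (\prod_(y <- r) (mu x.2 - y)) * mono x.2 m =
  (\prod_(y <- r) (lam - y)) * F m.
Proof.
move=> HF HU; elim=> [|y r IH] m.
  rewrite big_nil mul1r HF; apply: eq_bigr => x _; by rewrite big_nil mulr1.
have E1 : \sum_(x <- s) x.1 * \prod_(y0 <- y :: r) (mu x.2 - y0) * mono x.2 m =
   \sum_(x <- s) x.1 * (\prod_(y0 <- r) (mu x.2 - y0)) * mono x.2 (fun i => (p i * m i)%N)
   - y * \sum_(x <- s) x.1 * (\prod_(y0 <- r) (mu x.2 - y0)) * mono x.2 m.
  rewrite mulr_sumr -sumrB; apply: eq_bigr => x _.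
  rewrite big_cons mono_US; ring.
by rewrite E1 !IH HU big_cons; ring.
Qed.

Lemma monoP k : inH (mono k).
Proof.
exists 1%N, (fun _ => 1), (fun _ i => phi (k i)); split.
  move=> _ i; exists 1%N, (fun _ => 1), (fun _ => k i).
  by apply: functional_extensionality => m; rewrite big_ord1 mul1r.
apply: functional_extensionality => m; rewrite big_ord1 mul1r /tensor /mono.
by apply: eq_bigr => i _; rewrite phiE.
Qed.

Lemma mono_eig k : eigvec p (mu k) (mono k).
Proof.
split; first exact: monoP.
by apply: functional_extensionality => m; rewrite /US mono_US.
Qed.

Lemma mono_neq0 k : mono k <> (fun _ => 0).
Proof.
move=> /(congr1 (fun G => G (fun _ => 1%N))) /eqP.
rewrite /mono big1 ?oner_eq0 // => i _; by rewrite expr1n.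
Qed.

Lemma exists_nz (F : seriesn n) : F <> (fun _ => 0) -> exists m, F m != 0.
Proof.
move=> H; apply: Classical_Prop.NNPP => H2; apply: H.
apply: functional_extensionality => m; apply/eqP; apply: Classical_Prop.NNPP => H3.
by apply: H2; exists m; apply/negP.
Qed.

End S.

Theorem mainTheorem18 (n : nat) (p : 'I_n -> nat)
    (p_prime : forall i, prime (p i)) (p_inj : injective p) :
  (forall lam : C,
     in_spectrum p lam <->
     exists k : 'I_n -> nat, lam = (\prod_(i < n) p i ^ k i)%:R) /\
  (forall lam : C, in_spectrum p lam -> multiplicity_one p lam).
Proof.
have spec : forall lam, in_spectrum p lam -> exists k, lam = mu p k.
  move=> lam [F [[HH HU] Hnz]].
  have [s Hs] := isP_H HH.
  have HU' : forall m, F (fun i => (p i * m i)%N) = lam * F m.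
    by move=> m; have := congr1 (fun G => G m) HU.
  have K := @key _ p _ _ _ Hs HU' [seq mu p x.2 | x : C * {ffun 'I_n -> nat} <- s].
  have [m Hm] := exists_nz Hnz.
  have : (\prod_(y <- [seq mu p x.2 | x : C * {ffun 'I_n -> nat} <- s]) (lam - y)) * F m == 0.
    rewrite -K big1_seq // => x xs.
    have -> : \prod_(y <- [seq mu p x0.2 | x0 : C * {ffun 'I_n -> nat} <- s]) (mu p x.2 - y) = 0.
      apply/eqP; rewrite prodf_seq_eq0; apply/hasP.
      exists (mu p x.2); first by apply: map_f; move: xs.
      by rewrite /= subr_eq0.
    by rewrite mulr0 mul0r.
  rewrite mulf_eq0 (negbTE Hm) orbF prodf_seq_eq0 => /hasP [y /mapP [x _ ->]].
  by rewrite subr_eq0 => /eqP ->; exists x.2.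
split.
  move=> lam; split.
    by move/spec => [k ->]; exists k.
  move=> [k ->]; exists (mono k); split; [exact: mono_eig | exact: mono_neq0].
move=> lam /spec [k0 ->]; exists (mono k0); split; [exact: mono_eig | exact: mono_neq0|].
move=> G [HH HU].
have [s Hs] := isP_H HH.
have HU' : forall m, G (fun i => (p i * m i)%N) = mu p k0 * G m.
  by move=> m; have := congr1 (fun H => H m) HU.
set r := [seq y <- [seq mu p x.2 | x : C * {ffun 'I_n -> nat} <- s] | y != mu p k0].
have K := @key _ p _ _ _ Hs HU' r.
have Pnz : \prod_(y <- r) (mu p k0 - y) != 0.
  rewrite prodf_seq_neq0; apply/allP => y; rewrite mem_filter => /andP [Hy _].
  by rewrite subr_eq0 eq_sym.
exists ((\prod_(y <- r) (mu p k0 - y))^-1 *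
        \sum_(x <- s | mu p x.2 == mu p k0) x.1 * \prod_(y <- r) (mu p k0 - y)).
apply: functional_extensionality => m.
apply: (mulfI Pnz); rewrite -K.
rewrite !mulrA mulrV // mul1r big_distrl /= [RHS]big_mkcond /=.
apply: eq_big_seq => x xs.
case: (mu p x.2 =P mu p k0) => [E|NE].
  have -> : mono x.2 = mono k0.
    apply: functional_extensionality => m'; rewrite /mono.
    by apply: eq_bigr => i _; rewrite (@mu_inj _ _ p_prime p_inj _ _ E i).
  by rewrite E.
have -> : \prod_(y <- r) (mu p x.2 - y) = 0.
  apply/eqP; rewrite prodf_seq_eq0; apply/hasP; exists (mu p x.2); last by rewrite /= subr_eq0.
  rewrite mem_filter; apply/andP; split.
    by apply/eqP.
  by apply/mapP; exists x.
by rewrite mulr0 mul0r.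
Qed.
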